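(* Let $X\sim\mathrm{Binom}(n,\tfrac12)$. Then, as $n\to\infty$, with logarithms natural (units: nats), $$H(X)=\frac12\ln\frac{\pi e n}{2}-\frac1{12n^2}+O(n^{-3}),$$ $$V(X)=\frac12-\frac1{2n}-\frac1{2n^2}+O(n^{-3}),$$ where $H(X)=\mathbb E[\ln\frac1{P_X(X)}]$ is the entropy and $V(X)=\mathrm{Var}[\ln\frac1{P_X(X)}]$ is the varentropy. *)

(* Defs.v *)
From Stdlib Require Import Reals.
Open Scope R_scope.

Definition binom_half_pmf (n k : nat) : R := C n k / 2 ^ n.

Definition binom_half_info (n k : nat) : R := ln (/ binom_half_pmf n k).

Definition binom_half_entropy (n : nat) : R :=
  sum_f_R0 (fun k => binom_half_pmf n k * binom_half_info n k) n.

Definition binom_half_varentropy (n : nat) : R :=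
  sum_f_R0 (fun k => binom_half_pmf n k *
                     (binom_half_info n k - binom_half_entropy n) ^ 2) n.

(* Main.v *)
Require Import Defs.
From Stdlib Require Import Reals Lra Lia Psatz Factorial.
From Coquelicot Require Import Coquelicot.
From Stdlib Require Import List. Import ListNotations.
Open Scope R_scope.

(* Proof outline:
   - Stirling's formula with O(m^-3) error (via telescoping + Wallis integrals for the constant),
   - Taylor bounds for (1+u)ln(1+u)+(1-u)ln(1-u) and ln(1-u^2),
   - exact central moments of the symmetric binomial up to order 12,
   - pointwise approximation of the information density by a polynomial Q0, with error
     controlled by a polynomial Err whose expectation is O(n^-3). *)

Lemma mvt_bound (h h' : R -> R) (B : R) (k : nat) (y : R) : 0 <= B ->
  (forall c, Rabs c <= Rabs y -> derivable_pt_lim h c (h' c)) ->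
  (forall c, Rabs c <= Rabs y -> Rabs (h' c) <= B * Rabs c ^ k) ->
  h 0 = 0 -> Rabs (h y) <= B * Rabs y ^ (S k).
Proof.
  intros HB0 Hd Hb H0.
  assert (Hc : forall c, Rmin 0 y <= c <= Rmax 0 y -> Rabs c <= Rabs y).
  { intros c [H1 H2]. unfold Rmin, Rmax in *.
    unfold Rabs; repeat destruct Rcase_abs; destruct (Rle_dec 0 y); lra. }
  destruct (MVT_abs h h' 0 y) as [c [Heq Hin]].
  { intros c Hin. apply Hd. now apply Hc. }
  rewrite H0, Rminus_0_r, Rminus_0_r in Heq. rewrite Heq.
  specialize (Hc c Hin).
  assert (0 <= Rabs c ^ k) by (apply pow_le; apply Rabs_pos).
  assert (Rabs c ^ k <= Rabs y ^ k) by (apply pow_incr; split; [apply Rabs_pos|lra]).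
  simpl. specialize (Hb c Hc).
  assert (0 <= Rabs y) by apply Rabs_pos.
  assert (0 <= Rabs (h' c)) by apply Rabs_pos.
  assert (B * Rabs c ^ k <= B * Rabs y ^ k) by (apply Rmult_le_compat_l; lra).
  assert (Rabs (h' c) * Rabs y <= (B * Rabs y ^ k) * Rabs y)
    by (apply Rmult_le_compat_r; lra).
  lra.
Qed.


Lemma abs_half u : Rabs u <= /2 -> -/2 <= u <= /2.
Proof. unfold Rabs; destruct Rcase_abs; lra. Qed.

Lemma Rabs_pow_e u k : Rabs u ^ k = Rabs (u ^ k).
Proof. now rewrite RPow_abs. Qed.

Definition hT1 u := ln (1+u) - ln (1-u) - 2*u - 2*u^3/3 - 2*u^5/5.

Lemma T1 u : Rabs u <= /2 -> Rabs (hT1 u) <= 8/3 * Rabs u ^ 7.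
Proof.
  intros Hu.
  apply (mvt_bound hT1 (fun c => 2*c^6/(1-c^2))); [lra| | |].
  - intros c Hc. assert (Hc2: Rabs c <= /2) by lra. apply abs_half in Hc2. apply is_derive_Reals. unfold hT1.
    auto_derive. { repeat split; lra. } field. repeat split; nra.
  - intros c Hc. assert (Hc2: Rabs c <= /2) by lra. pose proof (abs_half _ Hc2).
    rewrite Rabs_pow_e. 
    assert (0 <= c^6) by (replace (c^6) with ((c^3)^2) by ring; apply pow2_ge_0).
    assert (c^2 <= /4) by nra.
    rewrite Rabs_pos_eq.
    + apply Rle_trans with (2*c^6 * (4/3)).
      * assert (Hi: /(1-c^2) <= 4/3).
        { replace (4/3) with (/(3/4)) by field. apply Rinv_le_contravar; lra. }
        unfold Rdiv. apply Rmult_le_compat_l; lra.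
      * rewrite (Rabs_pos_eq (c^6)) by lra. lra.
    + apply Rmult_le_pos; [lra|]. apply Rlt_le, Rinv_0_lt_compat. lra.
  - unfold hT1. replace (1+0) with 1 by ring. replace (1-0) with 1 by ring.
    rewrite ln_1. field.
Qed.

Definition phi u := (1+u) * ln (1+u) + (1-u) * ln (1-u).
Definition hT2 u := phi u - u^2 - u^4/6 - u^6/15.

Lemma T2 u : Rabs u <= /2 -> Rabs (hT2 u) <= 8/3 * Rabs u ^ 8.
Proof.
  intros Hu.
  apply (mvt_bound hT2 hT1); [lra| | |].
  - intros c Hc. assert (Hc2: Rabs c <= /2) by lra. apply abs_half in Hc2.
    apply is_derive_Reals. unfold hT2, phi, hT1.
    auto_derive. { repeat split; lra. } replace (1 + - c) with (1 - c) by ring. field. lra.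
  - intros c Hc. apply T1. lra.
  - unfold hT2, phi. replace (1+0) with 1 by ring. replace (1-0) with 1 by ring.
    rewrite ln_1. field.
Qed.

Definition hT3 u := ln (1 - u^2) + u^2 + u^4/2.

Lemma T3 u : Rabs u <= /2 -> Rabs (hT3 u) <= 8/3 * Rabs u ^ 6.
Proof.
  intros Hu.
  apply (mvt_bound hT3 (fun c => - (2*c^5/(1-c^2)))); [lra| | |].
  - intros c Hc. assert (Hc2: Rabs c <= /2) by lra. apply abs_half in Hc2.
    apply is_derive_Reals. unfold hT3.
    auto_derive. { nra. } field. nra.
  - intros c Hc. assert (Hc2: Rabs c <= /2) by lra. pose proof (abs_half _ Hc2).
    rewrite Rabs_Ropp.
    assert (Hc4: 0 <= c^4) by (replace (c^4) with ((c^2)^2) by ring; apply pow2_ge_0).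
    assert (c^2 <= /4) by nra.
    assert (Hi: /(1-c^2) <= 4/3).
    { replace (4/3) with (/(3/4)) by field. apply Rinv_le_contravar; lra. }
    assert (Hp: 0 < /(1-c^2)) by (apply Rinv_0_lt_compat; lra).
    unfold Rdiv. rewrite !Rabs_mult, (Rabs_pos_eq 2) by lra.
    rewrite (Rabs_pos_eq (/ _)) by lra. rewrite <- RPow_abs.
    assert (0 <= Rabs c ^ 5) by (apply pow_le, Rabs_pos).
    assert (2 * Rabs c ^ 5 * / (1 - c ^ 2) <= 2 * Rabs c ^ 5 * (4/3))
      by (apply Rmult_le_compat_l; lra).
    simpl in *. lra.
  - unfold hT3. replace (1-0^2) with 1 by ring. rewrite ln_1. field.
Qed.


Lemma ln_le_sub1 y : 0 < y -> ln y <= y - 1.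
Proof.
  intros Hy. destruct (Req_dec (ln y) 0) as [E|E].
  - rewrite E. assert (y = 1) by (rewrite <- (exp_ln y) by lra; rewrite E; apply exp_0). lra.
  - pose proof (exp_ineq1 _ E). rewrite exp_ln in H by lra. lra.
Qed.

Definition sinp (n : nat) (x : R) := sin x ^ n.
Definition W (n : nat) : R := RInt (sinp n) 0 (PI/2).

Lemma sinp_cont n x : continuous (sinp n) x.
Proof. apply (ex_derive_continuous (V:=R_NormedModule) (sinp n)). unfold sinp. auto_derive. auto. Qed.

Lemma sinp_ex n : ex_RInt (sinp n) 0 (PI/2).
Proof. apply (ex_RInt_continuous (V:=R_CompleteNormedModule)). intros; apply sinp_cont. Qed.

Lemma PI2_pos : 0 < PI/2.
Proof. pose proof PI_RGT_0. lra. Qed.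

Lemma W0 : W 0 = PI/2.
Proof.
  unfold W, sinp. simpl. rewrite RInt_const. unfold scal; simpl.
  unfold mult; simpl. ring.
Qed.

Lemma W1 : W 1 = 1.
Proof.
  unfold W. apply is_RInt_unique.
  replace 1 with (minus ((fun x => - cos x) (PI/2)) ((fun x => - cos x) 0)).
  2:{ unfold minus, plus, opp; simpl. rewrite cos_PI2, cos_0. ring. }
  apply (is_RInt_derive (V:=R_CompleteNormedModule) (fun x => - cos x)).
  - intros x _. unfold sinp. auto_derive; auto. ring.
  - intros; apply sinp_cont.
Qed.

Lemma W_rec n : INR (S (S n)) * W (S (S n)) = INR (S n) * W n.
Proof.
  assert (H0: is_RInt (fun x => INR (S (S n)) * sinp (S (S n)) x - INR (S n) * sinp n x)
                     0 (PI/2) (minus ((fun x => - cos x * sin x ^ (S n)) (PI/2))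
                           ((fun x => - cos x * sin x ^ (S n)) 0))).
  { apply (is_RInt_derive (V:=R_CompleteNormedModule) (fun x => - cos x * sin x ^ (S n))).
    - intros x _. unfold sinp. auto_derive; auto.
      change (match n with 0%nat => 1 | S _ => INR n + 1 end) with (INR (S n)).
      rewrite !S_INR. pose proof (sin2_cos2 x) as Hs. unfold Rsqr in Hs.
      transitivity (sin x * sin x * sin x ^ n - (INR n + 1) * sin x ^ n * (cos x * cos x)).
      { ring. }
      replace (cos x * cos x) with (1 - sin x * sin x) by lra. simpl. ring.
    - intros x _. apply (ex_derive_continuous (V:=R_NormedModule)). unfold sinp. auto_derive. auto. }
  assert (H1 := is_RInt_scal _ _ _ (INR (S (S n))) _ (RInt_correct _ _ _ (sinp_ex (S (S n))))).
  assert (H2 := is_RInt_scal _ _ _ (INR (S n)) _ (RInt_correct _ _ _ (sinp_ex n))).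
  assert (H3 := is_RInt_minus _ _ _ _ _ _ H1 H2).
  assert (H4 : is_RInt (fun x => INR (S (S n)) * sinp (S (S n)) x - INR (S n) * sinp n x)
                     0 (PI/2) (minus (scal (INR (S (S n))) (RInt (sinp (S (S n))) 0 (PI / 2)))
                                     (scal (INR (S n)) (RInt (sinp n) 0 (PI / 2))))).
  { eapply is_RInt_ext; [|exact H3]. intros x _. reflexivity. }
  assert (E := is_RInt_unique _ _ _ _ H0).
  assert (E4 := is_RInt_unique _ _ _ _ H4).
  rewrite E in E4. fold (W (S (S n))) in E4. fold (W n) in E4.
  revert E4. generalize (INR (S (S n))) (INR (S n)) (W (S (S n))) (W n).
  intros a b w2 w0 E4.
  unfold minus, plus, opp, scal in E4; simpl in E4. unfold mult in E4; simpl in E4.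
  rewrite cos_PI2, sin_0 in E4. lra.
Qed.

Lemma W_le n : W (S n) <= W n.
Proof.
  unfold W. apply RInt_le; [pose proof PI2_pos; lra | apply sinp_ex | apply sinp_ex |].
  intros x Hx. unfold sinp. simpl.
  assert (0 <= sin x) by (apply sin_ge_0; pose proof PI_RGT_0; lra).
  assert (sin x <= 1) by (pose proof (SIN_bound x); lra).
  assert (0 <= sin x ^ n) by (apply pow_le; lra).
  nra.
Qed.

Lemma INR2 : INR 2 = 2.
Proof. simpl; ring. Qed.

Fixpoint cw (m : nat) : R :=
  match m with O => 1 | S m' => cw m' * (2 * INR m' + 1) / (2 * INR m' + 2) end.

Lemma cw_pos m : 0 < cw m.
Proof.
  induction m; simpl; [lra|]. pose proof (pos_INR m).
  apply Rmult_lt_0_compat; [apply Rmult_lt_0_compat; lra|]. apply Rinv_0_lt_compat; lra.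
Qed.

Lemma W_even m : W (2*m) = PI/2 * cw m.
Proof.
  induction m. { simpl. rewrite W0. ring. }
  replace (2 * S m)%nat with (S (S (2*m))) by lia.
  pose proof (W_rec (2*m)) as R. rewrite IHm in R.
  rewrite !S_INR, mult_INR in R. rewrite INR2 in R. simpl cw. 
  pose proof (pos_INR m).
  apply (Rmult_eq_reg_l (2 * INR m + 1 + 1)); [|lra].
  rewrite R. field. lra.
Qed.

Lemma W_odd m : W (S (2*m)) * (2 * INR m + 1) * cw m = 1.
Proof.
  induction m. { simpl. rewrite W1. ring. }
  replace (S (2 * S m))%nat with (S (S (S (2*m)))) by lia.
  pose proof (W_rec (S (2*m))) as R.
  rewrite !S_INR, mult_INR in R. rewrite INR2 in R. simpl cw. rewrite S_INR.
  pose proof (pos_INR m).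
  assert (E: W (S (S (S (2 * m)))) = (2*INR m + 1 + 1) * W (S (2*m)) / (2 * INR m + 1 + 1 + 1)).
  { apply (Rmult_eq_reg_l (2*INR m+1+1+1)); [|lra]. rewrite R. field. lra. }
  rewrite E. transitivity (W (S (2*m)) * (2 * INR m + 1) * cw m); [|exact IHm]. field. lra.
Qed.

Lemma wallis_lo m : 2 <= PI * (2 * INR m + 1) * cw m ^ 2.
Proof.
  pose proof (W_le (2*m)) as L. rewrite W_even in L.
  pose proof (W_odd m) as O. pose proof (cw_pos m). pose proof (pos_INR m).
  assert (W (S (2*m)) = / ((2 * INR m + 1) * cw m)).
  { apply Rmult_eq_reg_r with ((2 * INR m + 1) * cw m); [|nra].
    rewrite Rinv_l by nra. rewrite <- Rmult_assoc. exact O. }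
  rewrite H1 in L.
  apply (Rmult_le_compat_r ((2 * INR m + 1) * cw m)) in L; [|nra].
  rewrite Rinv_l in L; [|nra]. nra.
Qed.

Lemma wallis_hi m : PI * INR (S m) * cw (S m) ^ 2 <= 1.
Proof.
  pose proof (W_le (S (2*m))) as L.
  replace (S (S (2 * m))) with (2 * S m)%nat in L by lia. rewrite W_even in L.
  pose proof (W_odd m) as O. pose proof (cw_pos m). pose proof (pos_INR m).
  assert (W (S (2*m)) = / ((2 * INR m + 1) * cw m)).
  { apply Rmult_eq_reg_r with ((2 * INR m + 1) * cw m); [|nra].
    rewrite Rinv_l by nra. rewrite <- Rmult_assoc. exact O. }
  rewrite H1 in L. simpl cw in *. rewrite S_INR.
  apply (Rmult_le_compat_r ((2 * INR m + 1) * cw m)) in L; [|nra].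
  rewrite Rinv_l in L; [|nra].
  revert L. generalize (cw m) H PI_RGT_0. intros c Hc Hpi L.
  replace (PI * (INR m + 1) * (c * (2 * INR m + 1) / (2 * INR m + 2)) ^ 2)
    with (PI / 2 * (c * (2 * INR m + 1) / (2 * INR m + 2)) * ((2 * INR m + 1) * c))
    by (field; lra).
  lra.
Qed.


Definition lnf (m : nat) := ln (INR (fact m)).
Definition dS (m : nat) := lnf m - (INR m + /2) * ln (INR m) + INR m - /(12 * INR m).

Lemma INR_fact_pos m : 0 < INR (fact m).
Proof. apply lt_0_INR. apply lt_O_fact. Qed.

Lemma lnf_S m : lnf (S m) = ln (INR m + 1) + lnf m.
Proof.
  unfold lnf. change (fact (S m)) with (S m * fact m)%nat.
  rewrite mult_INR, S_INR. apply ln_mult. pose proof (pos_INR m); lra. apply INR_fact_pos.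
Qed.

Lemma dS_step_aux (M x r : R) : 2 <= M -> x = /(2*M+1) -> Rabs r <= 8/3 * x^7 ->
  0 <= - (M + /2) * (2*x + 2*x^3/3 + 2*x^5/5 + r) + 1 + /(12*M*(M+1)) <= /M^3 - /(M+1)^3.
Proof.
  intros HM Hx Hr.
  assert (Hx0 : 0 < x) by (rewrite Hx; apply Rinv_0_lt_compat; lra).
  assert (Hx5 : x <= /5) by (rewrite Hx; apply Rinv_le_contravar; lra).
  assert (HMx : M = (1 - x)/(2*x)).
  { rewrite Hx. field. lra. }
  assert (Heq : - (M + /2) * (2*x + 2*x^3/3 + 2*x^5/5 + r) + 1 + /(12*M*(M+1))
                = x^4/(3*(1-x^2)) - x^4/5 - r/(2*x)).
  { rewrite HMx. field. repeat split; try lra. nra. }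
  rewrite Heq.
  assert (Hr2 : Rabs (r/(2*x)) <= 4/3 * x^6).
  { unfold Rdiv. rewrite Rabs_mult, (Rabs_pos_eq (/ (2*x))) by (apply Rlt_le, Rinv_0_lt_compat; lra).
    apply Rle_trans with (8/3 * x^7 * /(2*x)).
    - apply Rmult_le_compat_r; [apply Rlt_le, Rinv_0_lt_compat; lra | exact Hr].
    - right. field. lra. }
  assert (Hr3 : - (4/3 * x^6) <= r/(2*x) <= 4/3 * x^6) by (revert Hr2; unfold Rabs; destruct Rcase_abs; intros; lra).
  assert (Hx2 : x^2 <= /25) by nra.
  assert (Hx4 : 0 < x^4) by (apply pow_lt; lra).
  assert (Hx6 : x^6 = x^4 * x^2) by ring.
  assert (Hinv1 : 1 <= /(1-x^2)).
  { rewrite <- Rinv_1 at 1. apply Rinv_le_contravar; nra. }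
  assert (Hinv2 : /(1-x^2) <= 25/24).
  { replace (25/24) with (/(24/25)) by field. apply Rinv_le_contravar; nra. }
  assert (Ea : x^4/(3*(1-x^2)) = x^4/3 * /(1-x^2)) by (field; nra).
  rewrite Ea.
  assert (A1 : x^4/3 <= x^4/3 * /(1-x^2)) by nra.
  assert (A2 : x^4/3 * /(1-x^2) <= x^4/3 * (25/24)) by nra.
  split; [nra|].
  assert (U : x^4/3 * /(1-x^2) - x^4/5 - r/(2*x) <= x^4/4) by nra.
  eapply Rle_trans; [exact U|].
  assert (HM1 : x^4/4 <= /(M+1)^4).
  { assert (E4 : x^4 = /((2*M+1)^4)) by (rewrite Hx; apply pow_inv).
    rewrite E4.
    apply Rle_trans with (/((2*M+1)^4)).
    - assert (0 < /((2*M+1)^4)) by (apply Rinv_0_lt_compat, pow_lt; lra). lra.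
    - apply Rinv_le_contravar; [apply pow_lt; lra|]. apply pow_incr; lra. }
  eapply Rle_trans; [exact HM1|].
  replace (/M^3 - /(M+1)^3) with (((M+1)^3 - M^3)/(M^3*(M+1)^3)) by (field; lra).
  apply Rle_trans with ((M^3 * (M+1)^3)/(M+1)^4 /(M^3*(M+1)^3)).
  - right. field. lra.
  - unfold Rdiv. apply Rmult_le_compat_r.
    + apply Rlt_le, Rinv_0_lt_compat. apply Rmult_lt_0_compat; apply pow_lt; lra.
    + apply Rle_trans with (M^3 * (M+1)^3 / (M+1)^3 * /(M+1)).
      * right. field. lra.
      * replace (M^3 * (M+1)^3 / (M+1)^3) with (M^3) by (field; lra).
        apply Rle_trans with (M^3 * /M); [apply Rmult_le_compat_l; [apply pow_le; lra|apply Rinv_le_contravar; lra]|].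
        replace (M^3 * /M) with (M^2) by (field; lra). nra.
Qed.

Lemma dS_step m : (2 <= m)%nat -> 0 <= dS (S m) - dS m <= /INR m^3 - /INR (S m)^3.
Proof.
  intros Hm. set (M := INR m).
  assert (HM : 2 <= M) by (unfold M; replace 2 with (INR 2) by apply INR2; apply le_INR; lia).
  set (x := /(2*M+1)).
  assert (Hx0 : 0 < x) by (unfold x; apply Rinv_0_lt_compat; lra).
  assert (Hx5 : x <= /5) by (unfold x; apply Rinv_le_contravar; lra).
  assert (HL : ln (M+1) - ln M = ln (1+x) - ln (1-x)).
  { assert (E1 : 1 + x = (M+1) * (2/(2*M+1))) by (unfold x; field; lra).
    assert (E2 : 1 - x = M * (2/(2*M+1))) by (unfold x; field; lra).
    rewrite E1, E2, !ln_mult; try lra; apply Rdiv_lt_0_compat; lra. }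
  pose proof (T1 x) as HT. 
  assert (Hax : Rabs x <= /2) by (rewrite Rabs_pos_eq; lra).
  specialize (HT Hax). rewrite (Rabs_pos_eq x) in HT by lra.
  set (r := hT1 x) in HT.
  assert (HLr : ln (M+1) - ln M = 2*x + 2*x^3/3 + 2*x^5/5 + r) by (rewrite HL; unfold r, hT1; ring).
  assert (Hd : dS (S m) - dS m = - (M + /2) * (2*x + 2*x^3/3 + 2*x^5/5 + r) + 1 + /(12*M*(M+1))).
  { unfold dS. rewrite lnf_S, S_INR. fold M. rewrite <- HLr. field. lra. }
  rewrite Hd. rewrite S_INR. fold M.
  apply dS_step_aux; auto.
Qed.

Lemma dS_tele m j : (2 <= m)%nat -> 0 <= dS (m + j) - dS m <= /INR m^3 - /INR (m+j)^3.
Proof.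
  intros Hm. induction j.
  - rewrite Nat.add_0_r. lra.
  - replace (m + S j)%nat with (S (m + j)) by lia.
    pose proof (dS_step (m+j) ltac:(lia)). lra.
Qed.

Lemma dS_tele' m j : (2 <= m)%nat -> 0 <= dS (m + j) - dS m <= /INR m^3.
Proof.
  intros Hm. pose proof (dS_tele m j Hm).
  assert (0 < INR (m+j)) by (apply lt_0_INR; lia).
  assert (0 < / INR (m+j)^3) by (apply Rinv_0_lt_compat, pow_lt; lra). lra.
Qed.

Lemma cw_fact m : cw m * INR (fact m)^2 * 4^m = INR (fact (2*m)).
Proof.
  induction m. { simpl. ring. }
  replace (2 * S m)%nat with (S (S (2*m))) by lia.
  change (fact (S (S (2*m)))) with (S (S (2*m)) * (S (2*m) * fact (2*m)))%nat.
  change (fact (S m)) with (S m * fact m)%nat.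
  rewrite !mult_INR, <- IHm. rewrite !S_INR, mult_INR, INR2. simpl cw. simpl pow.
  field. pose proof (pos_INR m). lra.
Qed.

Definition Dc := (ln 2 + ln PI) / 2.

Lemma ln_cw m : (1 <= m)%nat ->
  2 * ln (cw m) = 2 * dS (2*m) - 4 * dS m + ln 2 - ln (INR m) - /(4 * INR m).
Proof.
  intros Hm. pose proof (cw_fact m) as F.
  assert (HM : 1 <= INR m) by (replace 1 with (INR 1) by reflexivity; apply le_INR; lia).
  pose proof (cw_pos m). pose proof (INR_fact_pos m). pose proof (INR_fact_pos (2*m)).
  assert (L: ln (INR (fact (2*m))) = ln (cw m) + 2 * ln (INR (fact m)) + INR m * (2 * ln 2)).
  { rewrite <- F. rewrite !ln_mult; try (apply pow_lt; lra); try lra.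
    2: apply Rmult_lt_0_compat; try apply pow_lt; lra.
    rewrite !ln_pow by lra. replace 4 with (2*2) by ring. rewrite ln_mult by lra.
    simpl INR. ring. }
  unfold dS, lnf. rewrite L. rewrite mult_INR, INR2.
  rewrite (ln_mult 2 (INR m)) by lra. field. lra.
Qed.

Lemma ln_le_x y : 0 <= y -> ln (1 + y) <= y.
Proof. intros. pose proof (ln_le_sub1 (1+y)). lra. Qed.

Lemma dS_near m : (2 <= m)%nat ->
  Dc - /(8 * INR m) <= dS m <= Dc + /(8 * INR m) + / INR m ^ 3.
Proof.
  intros Hm.
  assert (HM : 2 <= INR m) by (rewrite <- INR2; apply le_INR; lia).
  pose proof (ln_cw m ltac:(lia)) as Lc.
  pose proof (cw_pos m) as Hc.
  pose proof PI_RGT_0 as Hpi.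
  destruct m as [|m']; [lia|].
  pose proof (wallis_hi m') as Wh. pose proof (wallis_lo (S m')) as Wl.
  set (m := S m') in *.
  assert (Hl1 : ln PI + ln (INR m) + 2 * ln (cw m) <= 0).
  { replace (2 * ln (cw m)) with (ln (cw m ^ 2)) by (rewrite ln_pow by lra; simpl; ring).
    rewrite <- !ln_mult; try lra; try (apply pow_lt; lra); try nra.
    rewrite <- ln_1. apply ln_le; [|lra]. apply Rmult_lt_0_compat; [nra|apply pow_lt; lra]. }
  assert (Hl2 : ln 2 <= ln PI + ln (2 * INR m + 1) + 2 * ln (cw m)).
  { replace (2 * ln (cw m)) with (ln (cw m ^ 2)) by (rewrite ln_pow by lra; simpl; ring).
    rewrite <- !ln_mult; try lra; try (apply pow_lt; lra); try nra.
    apply ln_le; lra. }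
  assert (Hln2m : ln (2 * INR m + 1) - ln (2 * INR m) <= /(2 * INR m)).
  { replace (2 * INR m + 1) with ((2 * INR m) * (1 + /(2 * INR m))) by (field; lra).
    rewrite ln_mult; try lra. 2: { assert (0 < /(2*INR m)) by (apply Rinv_0_lt_compat; lra). lra. }
    pose proof (ln_le_x (/(2 * INR m))). assert (0 < /(2*INR m)) by (apply Rinv_0_lt_compat; lra).
    lra. }
  rewrite (ln_mult 2 (INR m)) in Hln2m by lra.
  pose proof (dS_tele' m m ltac:(unfold m; lia)) as Ht.
  replace (m + m)%nat with (2 * m)%nat in Ht by lia.
  unfold Dc.
  assert (E8 : /(8 * INR m) = /(4 * INR m) / 2) by (field; lra).
  assert (E2 : /(2 * INR m) = 2 * /(4 * INR m)) by (field; lra).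
  rewrite E2 in Hln2m.
  split; lra.
Qed.

Lemma dS_near' m : (2 <= m)%nat -> Dc - 2 / INR m <= dS m <= Dc + 2 / INR m.
Proof.
  intros Hm. pose proof (dS_near m Hm).
  assert (HM : 2 <= INR m) by (rewrite <- INR2; apply le_INR; lia).
  assert (/(8 * INR m) <= / INR m) by (apply Rinv_le_contravar; lra).
  assert (/ INR m ^ 3 <= / INR m).
  { apply Rinv_le_contravar; [lra|]. simpl. nra. }
  assert (0 < / INR m) by (apply Rinv_0_lt_compat; lra).
  unfold Rdiv in *. lra.
Qed.

Lemma small_exists (m : nat) (eps : R) : 0 < eps -> exists j, 2 / INR (m + j) < eps /\ (1 <= m + j)%nat.
Proof.
  intros He. destruct (INR_archimed eps 2 He) as [N HN].
  exists (S N). split; [|lia].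
  assert (INR N + 1 <= INR (m + S N)) by (rewrite <- S_INR; apply le_INR; lia).
  pose proof (pos_INR N).
  apply (Rmult_lt_reg_r (INR (m + S N))); [lra|].
  unfold Rdiv. rewrite Rmult_assoc, Rinv_l by lra.
  assert (eps * (INR N + 1) <= eps * INR (m + S N)) by (apply Rmult_le_compat_l; lra). lra.
Qed.

Lemma stirling m : (2 <= m)%nat -> Dc - / INR m ^ 3 <= dS m <= Dc.
Proof.
  intros Hm. split.
  - destruct (Rle_lt_dec (Dc - / INR m ^ 3) (dS m)) as [H|H]; [exact H|exfalso].
    destruct (small_exists m (Dc - / INR m ^ 3 - dS m)) as [j [Hj _]]; [lra|].
    pose proof (dS_near' (m+j) ltac:(lia)). pose proof (dS_tele' m j Hm). lra.
  - destruct (Rle_lt_dec (dS m) Dc) as [H|H]; [exact H|exfalso].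
    destruct (small_exists m (dS m - Dc)) as [j [Hj _]]; [lra|].
    pose proof (dS_near' (m+j) ltac:(lia)). pose proof (dS_tele' m j Hm). lra.
Qed.


Definition Tsum (n : nat) (g : nat -> R) := sum_f_R0 (fun k => Binomial.C n k * g k) n.

Lemma Tsum_S n g : Tsum (S n) g = Tsum n g + Tsum n (fun k => g (S k)).
Proof.
  unfold Tsum. destruct n as [|n'].
  - simpl. rewrite C_n_0. replace (Binomial.C 1 1) with 1 by (rewrite C_n_n; reflexivity).
    rewrite C_n_0. ring.
  - rewrite (decomp_sum _ (S (S n'))) by lia. simpl pred.
    rewrite tech5.
    rewrite (decomp_sum (fun k => Binomial.C (S n') k * g k) (S n')) by lia. simpl pred.
    rewrite (tech5 (fun k => Binomial.C (S n') k * g (S k)) n').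
    rewrite !C_n_0, !C_n_n.
    rewrite (sum_eq (fun i => Binomial.C (S (S n')) (S i) * g (S i))
                    (fun i => Binomial.C (S n') i * g (S i) + Binomial.C (S n') (S i) * g (S i))).
    + rewrite sum_plus. ring.
    + intros i Hi. rewrite <- pascal by lia. ring.
Qed.

Definition Ex (n : nat) (g : nat -> R) := sum_f_R0 (fun k => binom_half_pmf n k * g k) n.

Lemma Ex_Tsum n g : Ex n g = Tsum n g / 2 ^ n.
Proof.
  unfold Ex, Tsum, binom_half_pmf, Rdiv. rewrite Rmult_comm, scal_sum.
  apply sum_eq. intros; ring.
Qed.

Lemma Ex_S n g : Ex (S n) g = /2 * (Ex n g + Ex n (fun k => g (S k))).
Proof.
  rewrite !Ex_Tsum, Tsum_S. simpl pow. field. apply pow_nonzero. lra.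
Qed.

Lemma Ex_ext n g h : (forall k, (k <= n)%nat -> g k = h k) -> Ex n g = Ex n h.
Proof. intros H. unfold Ex. apply sum_eq. intros. rewrite H; auto. Qed.

Lemma Ex_plus n g h : Ex n (fun k => g k + h k) = Ex n g + Ex n h.
Proof. unfold Ex. rewrite <- sum_plus. apply sum_eq. intros; ring. Qed.

Lemma Ex_scal n a g : Ex n (fun k => a * g k) = a * Ex n g.
Proof. unfold Ex. rewrite scal_sum. apply sum_eq. intros; ring. Qed.

Lemma Ex_one n : Ex n (fun _ => 1) = 1.
Proof.
  induction n.
  - unfold Ex, binom_half_pmf. simpl. rewrite C_n_0. field.
  - rewrite Ex_S, IHn. field.
Qed.

Lemma Ex_const n c : Ex n (fun _ => c) = c.
Proof.
  transitivity (Ex n (fun k => c * 1)). { apply Ex_ext; intros; ring. }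
  rewrite (Ex_scal n c (fun _ => 1)), Ex_one. ring.
Qed.

Lemma C_pos n k : 0 < Binomial.C n k.
Proof.
  unfold Binomial.C. apply Rdiv_lt_0_compat. apply lt_0_INR, lt_O_fact.
  apply Rmult_lt_0_compat; apply lt_0_INR, lt_O_fact.
Qed.

Lemma pmf_pos n k : 0 < binom_half_pmf n k.
Proof. unfold binom_half_pmf. apply Rdiv_lt_0_compat. apply C_pos. apply pow_lt; lra. Qed.

Lemma Ex_le n g h : (forall k, (k <= n)%nat -> g k <= h k) -> Ex n g <= Ex n h.
Proof.
  intros H. unfold Ex. apply sum_Rle. intros k Hk.
  apply Rmult_le_compat_l; [apply Rlt_le, pmf_pos|auto].
Qed.

Lemma Ex_abs n g : Rabs (Ex n g) <= Ex n (fun k => Rabs (g k)).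
Proof.
  unfold Ex. eapply Rle_trans; [apply Rsum_abs|]. right. apply sum_eq. intros.
  rewrite Rabs_mult, (Rabs_pos_eq (binom_half_pmf _ _)); [reflexivity|apply Rlt_le, pmf_pos].
Qed.

Lemma Ex_minus n g h : Ex n (fun k => g k - h k) = Ex n g - Ex n h.
Proof.
  unfold Rminus. rewrite Ex_plus. rewrite (Ex_ext n (fun k => - h k) (fun k => (-1) * h k))
   by (intros; ring). rewrite Ex_scal. ring.
Qed.

Lemma C_ge1 n k : (k <= n)%nat -> 1 <= Binomial.C n k.
Proof.
  revert k. induction n; intros k Hk.
  - assert (k = 0%nat) by lia. subst. rewrite C_n_0. lra.
  - destruct k. { rewrite C_n_0; lra. }
    destruct (Nat.eq_dec k n).
    + subst. rewrite C_n_n. lra.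
    + rewrite <- pascal by lia. pose proof (IHn k ltac:(lia)). pose proof (C_pos n (S k)). lra.
Qed.

Lemma sum_ge_term (a : nat -> R) k N : (forall i, 0 <= a i) -> (k <= N)%nat -> a k <= sum_f_R0 a N.
Proof.
  intros Ha Hk. induction N.
  - assert (k = 0%nat) by lia. subst. simpl. lra.
  - rewrite tech5. destruct (Nat.eq_dec k (S N)).
    + subst. pose proof (cond_pos_sum a N Ha). lra.
    + pose proof (IHN ltac:(lia)). pose proof (Ha (S N)). lra.
Qed.

Lemma C_le_pow n k : (k <= n)%nat -> Binomial.C n k <= 2 ^ n.
Proof.
  intros Hk. replace 2 with (1+1) by ring. rewrite binomial.
  replace (Binomial.C n k) with (Binomial.C n k * 1 ^ k * 1 ^ (n - k)) by (rewrite !pow1; ring).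
  apply (sum_ge_term (fun i => Binomial.C n i * 1 ^ i * 1 ^ (n - i))); auto.
  intros. rewrite !pow1. pose proof (C_pos n i). lra.
Qed.

Definition sv (n k : nat) := 2 * INR k - INR n.
Definition Mom (n j : nat) := Ex n (fun k => sv n k ^ j).

Fixpoint pe (l : list R) (i : nat) (x : R) : R :=
  match l with nil => 0 | cons c l' => c * x ^ i + pe l' (S i) x end.
Fixpoint pm (l : list R) (i n : nat) : R :=
  match l with nil => 0 | cons c l' => c * Mom n i + pm l' (S i) n end.

Lemma Ex_pe n l i : Ex n (fun k => pe l i (sv n k)) = pm l i n.
Proof.
  revert i. induction l as [|c l IH]; intros i; simpl.
  - apply Ex_const.
  - rewrite Ex_plus, Ex_scal, IH. reflexivity.
Qed.

Lemma Mom_S n j : Mom (S n) j = /2 * (Ex n (fun k => (sv n k - 1) ^ j) + Ex n (fun k => (sv n k + 1) ^ j)).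
Proof.
  unfold Mom. rewrite Ex_S. f_equal. f_equal.
  - apply Ex_ext. intros. unfold sv. rewrite S_INR. f_equal. ring.
  - apply Ex_ext. intros. unfold sv. rewrite !S_INR. f_equal. ring.
Qed.

Lemma Ex_0 g : Ex 0 g = g 0%nat.
Proof. unfold Ex, binom_half_pmf. simpl. rewrite C_n_0. field. Qed.

Lemma Mom_step n j l : (forall x, /2 * ((x - 1) ^ j + (x + 1) ^ j) = pe l 0 x) ->
  Mom (S n) j = pm l 0 n.
Proof.
  intros H. rewrite Mom_S, <- Ex_plus, <- Ex_scal, <- Ex_pe. apply Ex_ext. intros. apply H.
Qed.

Lemma Mom0 n : Mom n 0 = 1.
Proof. unfold Mom. simpl. apply Ex_one. Qed.

Ltac mom_ind l :=
  let n := fresh "n" in let IH := fresh "IH" in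
  intro n; induction n as [|n IH];
  [ unfold Mom; rewrite Ex_0; unfold sv; simpl; ring
  | rewrite (Mom_step n _ l) by (intros; cbn [pe]; field); cbn [pm];
    repeat match goal with H : forall m, Mom m _ = _ |- _ => rewrite H end;
    rewrite ?Mom0, IH, ?S_INR; ring ].

Lemma Mom2 : forall n, Mom n 2 = INR n.
Proof. mom_ind [1;0;1]. Qed.
Lemma Mom4 : forall n, Mom n 4 = 3 * INR n ^ 2 - 2 * INR n.
Proof. pose proof Mom2. mom_ind [1;0;6;0;1]. Qed.
Lemma Mom6 : forall n, Mom n 6 = 15 * INR n ^ 3 - 30 * INR n ^ 2 + 16 * INR n.
Proof. pose proof Mom2. pose proof Mom4. mom_ind [1;0;15;0;15;0;1]. Qed.
Lemma Mom8 : forall n, Mom n 8 = 105 * INR n ^ 4 - 420 * INR n ^ 3 + 588 * INR n ^ 2 - 272 * INR n.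
Proof. pose proof Mom2. pose proof Mom4. pose proof Mom6. mom_ind [1;0;28;0;70;0;28;0;1]. Qed.
Lemma Mom10 : forall n, Mom n 10 = 945 * INR n ^ 5 - 6300 * INR n ^ 4 + 16380 * INR n ^ 3
   - 18960 * INR n ^ 2 + 7936 * INR n.
Proof. pose proof Mom2. pose proof Mom4. pose proof Mom6. pose proof Mom8.
  mom_ind [1;0;45;0;210;0;210;0;45;0;1]. Qed.
Lemma Mom12 : forall n, Mom n 12 = 10395 * INR n ^ 6 - 103950 * INR n ^ 5 + 429660 * INR n ^ 4
   - 893640 * INR n ^ 3 + 911328 * INR n ^ 2 - 353792 * INR n.
Proof. pose proof Mom2. pose proof Mom4. pose proof Mom6. pose proof Mom8. pose proof Mom10.
  mom_ind [1;0;66;0;495;0;924;0;495;0;66;0;1]. Qed.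


Lemma info_eq n k : binom_half_info n k = INR n * ln 2 - ln (Binomial.C n k).
Proof.
  unfold binom_half_info, binom_half_pmf.
  pose proof (C_pos n k). assert (0 < 2 ^ n) by (apply pow_lt; lra).
  rewrite ln_Rinv by (apply Rdiv_lt_0_compat; lra). rewrite ln_div by lra.
  rewrite ln_pow by lra. ring.
Qed.

Lemma lnC_eq n k : ln (Binomial.C n k) = lnf n - lnf k - lnf (n - k).
Proof.
  unfold Binomial.C, lnf. pose proof (INR_fact_pos n). pose proof (INR_fact_pos k).
  pose proof (INR_fact_pos (n-k)).
  rewrite ln_div by (try apply Rmult_lt_0_compat; lra). rewrite ln_mult by lra. ring.
Qed.

Lemma lnf_dS m : lnf m = dS m + (INR m + /2) * ln (INR m) - INR m + /(12 * INR m).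
Proof. unfold dS. ring. Qed.

Definition Aof (n : nat) := /2 * ln (PI * INR n / 2).

Definition Q0 (N u : R) := N/2 * (u^2 + u^4/6 + u^6/15) - u^2/2 - u^4/4 + (1 + u^2)/(3*N) - /(12*N).

Definition Bc (N u : R) := N * u^8 + u^6 + u^4/N + /N^3.

Definition Err (N u : R) := N^2 * u^10 + N * u^8 + u^6 + u^4/N + u^2/N^2 + /N^3.

Lemma abs_pow_even u j : Rabs u ^ (2*j) = u ^ (2*j).
Proof. rewrite !pow_mult, pow2_abs. reflexivity. Qed.

Lemma central_identity n k (u : R) : (8 <= n)%nat -> (k <= n)%nat ->
  u = sv n k / INR n -> -/2 <= u <= /2 ->
  binom_half_info n k - Aof n - Q0 (INR n) u =
  INR n / 2 * hT2 u + /2 * hT3 u + u^4 / (3 * INR n * (1 - u^2))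
  + ((dS k - Dc) + (dS (n - k) - Dc) - (dS n - Dc)).
Proof.
  intros Hn Hk Hu Hub.
  set (N := INR n) in *.
  assert (HN : 8 <= N) by (unfold N; replace 8 with (INR 8) by (simpl; ring); apply le_INR; lia).
  assert (Hkv : INR k = N * (1 + u) / 2) by (rewrite Hu; unfold sv; fold N; field; lra).
  assert (Hnkv : INR (n - k) = N * (1 - u) / 2) by (rewrite minus_INR by lia; fold N; rewrite Hkv; field).
  assert (Hlk : ln (INR k) = ln N - ln 2 + ln (1 + u)).
  { rewrite Hkv. replace (N * (1 + u) / 2) with ((1+u) * (N / 2)) by field.
    rewrite ln_mult by (try apply Rdiv_lt_0_compat; lra). rewrite ln_div by lra. ring. }
  assert (Hlnk : ln (INR (n - k)) = ln N - ln 2 + ln (1 - u)).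
  { rewrite Hnkv. replace (N * (1 - u) / 2) with ((1-u) * (N / 2)) by field.
    rewrite ln_mult by (try apply Rdiv_lt_0_compat; lra). rewrite ln_div by lra. ring. }
  assert (Hl1u : ln (1 - u^2) = ln (1 + u) + ln (1 - u)).
  { replace (1 - u^2) with ((1+u)*(1-u)) by ring. apply ln_mult; lra. }
  assert (HA : Aof n = /2 * (ln PI + ln N - ln 2)).
  { unfold Aof. fold N. pose proof PI_RGT_0.
    rewrite ln_div by (try apply Rmult_lt_0_compat; lra). rewrite ln_mult by lra. ring. }
  rewrite info_eq, lnC_eq, !lnf_dS. fold N.
  rewrite Hlk, Hlnk, HA. unfold hT2, hT3, phi, Q0, Dc. rewrite Hl1u.
  rewrite Hkv, Hnkv.
  field. repeat split; try lra. nra.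
Qed.

Lemma INR_ge (m : nat) (c : nat) : (c <= m)%nat -> INR c <= INR m.
Proof. apply le_INR. Qed.

Lemma central_bound n k (u : R) : (8 <= n)%nat -> (k <= n)%nat ->
  u = sv n k / INR n -> -/2 <= u <= /2 ->
  Rabs (binom_half_info n k - Aof n - Q0 (INR n) u) <= 129 * Bc (INR n) u.
Proof.
  intros Hn Hk Hu Hub.
  rewrite (central_identity n k u) by auto.
  set (N := INR n) in *.
  assert (HN : 8 <= N) by (unfold N; replace 8 with (INR 8) by (simpl; ring); apply le_INR; lia).
  assert (Hkv : INR k = N * (1 + u) / 2) by (rewrite Hu; unfold sv; fold N; field; lra).
  assert (Hnkv : INR (n - k) = N * (1 - u) / 2) by (rewrite minus_INR by lia; fold N; rewrite Hkv; field).
  assert (Hk4 : N/4 <= INR k) by (rewrite Hkv; nra).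
  assert (Hnk4 : N/4 <= INR (n-k)) by (rewrite Hnkv; nra).
  assert (Hk2 : (2 <= k)%nat) by (apply INR_le; rewrite INR2; lra).
  assert (Hnk2 : (2 <= n - k)%nat) by (apply INR_le; rewrite INR2; lra).
  pose proof (stirling k Hk2) as Sk. pose proof (stirling (n-k) Hnk2) as Snk.
  pose proof (stirling n ltac:(lia)) as Sn. fold N in Sn.
  assert (Hinvk : / INR k ^ 3 <= 64 / N^3).
  { replace (64 / N^3) with (/ (N/4)^3) by (field; lra).
    apply Rinv_le_contravar; [apply pow_lt; lra|]. apply pow_incr; lra. }
  assert (Hinvnk : / INR (n-k) ^ 3 <= 64 / N^3).
  { replace (64 / N^3) with (/ (N/4)^3) by (field; lra).
    apply Rinv_le_contravar; [apply pow_lt; lra|]. apply pow_incr; lra. }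
  set (th := (dS k - Dc) + (dS (n - k) - Dc) - (dS n - Dc)).
  assert (HiN : 0 < / N^3) by (apply Rinv_0_lt_compat, pow_lt; lra).
  assert (Hth : Rabs th <= 129 / N^3).
  { unfold th. unfold Rabs. destruct Rcase_abs; unfold Rdiv in *; lra. }
  assert (Hau : Rabs u <= /2) by (unfold Rabs; destruct Rcase_abs; lra).
  pose proof (T2 u Hau) as H2. pose proof (T3 u Hau) as H3.
  replace 8%nat with (2*4)%nat in H2 by reflexivity. replace 6%nat with (2*3)%nat in H3 by reflexivity.
  rewrite abs_pow_even in H2, H3. simpl (2*4)%nat in H2. simpl (2*3)%nat in H3.
  assert (Hu2 : u^2 <= /4) by nra.
  assert (Hu4 : 0 <= u^4) by (replace (u^4) with ((u^2)^2) by ring; apply pow2_ge_0).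
  assert (Hu6 : 0 <= u^6) by (replace (u^6) with ((u^3)^2) by ring; apply pow2_ge_0).
  assert (Hu8 : 0 <= u^8) by (replace (u^8) with ((u^4)^2) by ring; apply pow2_ge_0).
  assert (Hr : Rabs (u ^ 4 / (3 * N * (1 - u ^ 2))) <= 4/9 * (u^4 / N)).
  { rewrite Rabs_pos_eq.
    - replace (u ^ 4 / (3 * N * (1 - u ^ 2))) with (u^4/N * (/(3 * (1 - u^2)))) by (field; split; lra).
      rewrite (Rmult_comm (4/9)). apply Rmult_le_compat_l.
      + apply Rdiv_le_0_compat; lra.
      + replace (4/9) with (/(9/4)) by field. apply Rinv_le_contravar; lra.
    - apply Rdiv_le_0_compat; [lra|]. apply Rmult_lt_0_compat; lra. }
  eapply Rle_trans; [apply Rabs_triang|].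
  eapply Rle_trans; [apply Rplus_le_compat_r; apply Rabs_triang|].
  eapply Rle_trans; [apply Rplus_le_compat_r; apply Rplus_le_compat_r; apply Rabs_triang|].
  rewrite Rabs_mult, (Rabs_mult (/2)), (Rabs_pos_eq (N/2)) by lra.
  rewrite (Rabs_pos_eq (/2)) by lra.
  unfold Bc.
  assert (N/2 * Rabs (hT2 u) <= N/2 * (8/3 * u^8)) by (apply Rmult_le_compat_l; lra).
  assert (0 <= u^4 / N) by (apply Rdiv_le_0_compat; lra).
  unfold Rdiv in *. nra.
Qed.

Lemma info_bounds n k : (k <= n)%nat -> 0 <= binom_half_info n k <= INR n * ln 2.
Proof.
  intros Hk. rewrite info_eq. pose proof (C_ge1 n k Hk). pose proof (C_le_pow n k Hk).
  assert (0 <= ln (Binomial.C n k)) by (rewrite <- ln_1; apply ln_le; lra).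
  assert (ln (Binomial.C n k) <= INR n * ln 2) by (rewrite <- ln_pow by lra; apply ln_le; lra).
  lra.
Qed.

Lemma A_bounds n : (1 <= n)%nat -> 0 <= Aof n <= INR n.
Proof.
  intros Hn. unfold Aof.
  assert (HN : 1 <= INR n) by (replace 1 with (INR 1) by reflexivity; apply le_INR; lia).
  pose proof PI_RGT_0. pose proof PI_4.
  assert (Hp : 1 <= PI * INR n / 2).
  { pose proof PI2_3_2. nra. }
  pose proof (ln_le_sub1 (PI * INR n / 2) ltac:(lra)).
  assert (0 <= ln (PI * INR n / 2)) by (rewrite <- ln_1; apply ln_le; lra).
  split; nra.
Qed.

Lemma pow_small v a j : 0 <= v <= a -> v ^ (S j) <= v * a ^ j.
Proof.
  intros H. simpl. apply Rmult_le_compat_l; [lra|]. apply pow_incr; lra.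
Qed.

Lemma Q0_gen N u : 8 <= N -> u^2 <= 1 -> Rabs (Q0 N u) <= N.
Proof.
  intros HN Hu. unfold Q0. set (v := u^2) in *.
  assert (Hv : 0 <= v) by (unfold v; apply pow2_ge_0).
  replace (u^4) with (v^2) by (unfold v; ring). replace (u^6) with (v^3) by (unfold v; ring).
  set (w := /N). assert (Hw : 0 < w <= /8).
  { split; [apply Rinv_0_lt_compat; lra| apply Rinv_le_contravar; lra]. }
  replace ((1 + v) / (3 * N)) with ((1+v) * w / 3) by (unfold w; field; lra).
  replace (/(12 * N)) with (w / 12) by (unfold w; field; lra).
  assert (0 <= v^2 <= v) by (simpl; nra). assert (0 <= v^3 <= v) by (simpl; nra).
  unfold Rabs; destruct Rcase_abs; nra.
Qed.

Lemma Q0_cen N u : 8 <= N -> u^2 <= /4 -> Rabs (Q0 N u) <= 2 * N * u^2 + 1.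
Proof.
  intros HN Hu. unfold Q0. set (v := u^2) in *.
  assert (Hv : 0 <= v) by (unfold v; apply pow2_ge_0).
  replace (u^4) with (v^2) by (unfold v; ring). replace (u^6) with (v^3) by (unfold v; ring).
  set (w := /N). assert (Hw : 0 < w <= /8).
  { split; [apply Rinv_0_lt_compat; lra| apply Rinv_le_contravar; lra]. }
  replace ((1 + v) / (3 * N)) with ((1+v) * w / 3) by (unfold w; field; lra).
  replace (/(12 * N)) with (w / 12) by (unfold w; field; lra).
  assert (0 <= v^2 <= v) by (simpl; nra). assert (0 <= v^3 <= v) by (simpl; nra).
  unfold Rabs; destruct Rcase_abs; nra.
Qed.

Lemma u_le1 n k : (1 <= n)%nat -> (k <= n)%nat -> (sv n k / INR n)^2 <= 1.
Proof.
  intros Hn Hk. unfold sv.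
  assert (HN : 1 <= INR n) by (replace 1 with (INR 1) by reflexivity; apply le_INR; lia).
  assert (INR k <= INR n) by (apply le_INR; lia). pose proof (pos_INR k).
  replace (((2 * INR k - INR n) / INR n) ^ 2) with ((2 * INR k - INR n) ^ 2 / INR n ^ 2) by (field; lra).
  apply Rle_trans with (INR n ^ 2 / INR n ^ 2).
  - unfold Rdiv. apply Rmult_le_compat_r. apply Rlt_le, Rinv_0_lt_compat, pow_lt; lra. nra.
  - right. field. lra.
Qed.

Lemma Err_nonneg_parts N u : 1 <= N -> 0 <= N^2 * u^10 /\ 0 <= N * u^8 /\ 0 <= u^6 /\
   0 <= u^4/N /\ 0 <= u^2/N^2 /\ 0 < /N^3.
Proof.
  intros HN.
  assert (0 <= u^2) by apply pow2_ge_0.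
  assert (0 <= u^4) by (replace (u^4) with ((u^2)^2) by ring; apply pow2_ge_0).
  assert (0 <= u^6) by (replace (u^6) with ((u^3)^2) by ring; apply pow2_ge_0).
  assert (0 <= u^8) by (replace (u^8) with ((u^4)^2) by ring; apply pow2_ge_0).
  assert (0 <= u^10) by (replace (u^10) with ((u^5)^2) by ring; apply pow2_ge_0).
  repeat split.
  - apply Rmult_le_pos; [apply pow2_ge_0|lra].
  - apply Rmult_le_pos; lra.
  - lra.
  - apply Rdiv_le_0_compat; lra.
  - apply Rdiv_le_0_compat; [lra| apply pow_lt; lra].
  - apply Rinv_0_lt_compat, pow_lt; lra.
Qed.

Lemma pointwise n k : (8 <= n)%nat -> (k <= n)%nat ->
  let N := INR n in let u := sv n k / N in
  let g := binom_half_info n k - Aof n in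
  Rabs (g - Q0 N u) <= 40000 * Err N u /\ Rabs (g^2 - Q0 N u ^2) <= 40000 * Err N u.
Proof.
  intros Hn Hk N u g.
  assert (HN : 8 <= N) by (unfold N; replace 8 with (INR 8) by (simpl; ring); apply le_INR; lia).
  destruct (Err_nonneg_parts N u ltac:(lra)) as [E1 [E2 [E3 [E4 [E5 E6]]]]].
  assert (Hsq : Rabs (g^2 - Q0 N u ^2) = Rabs (g - Q0 N u) * Rabs ((g - Q0 N u) + 2 * Q0 N u)).
  { rewrite <- Rabs_mult. f_equal. ring. }
  rewrite Hsq.
  assert (Hv : 0 <= u^2) by apply pow2_ge_0.
  destruct (Rle_dec (u^2) (/4)) as [Hc|Ht].
  -
    assert (Hub : -/2 <= u <= /2) by nra.
    pose proof (central_bound n k u Hn Hk eq_refl Hub) as CB. fold N g in CB.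
    pose proof (Q0_cen N u HN Hc) as QB.
    set (e := Rabs (g - Q0 N u)) in *.
    assert (He : 0 <= e) by apply Rabs_pos.
    assert (BE : Bc N u <= Err N u) by (unfold Bc, Err; lra).
    assert (BB : Bc N u <= N * u^2 + 1).
    { unfold Bc.
      assert (u^8 <= u^2 / 64).
      { replace (u^8) with ((u^2)^4) by ring. pose proof (pow_small (u^2) (/4) 3 ltac:(lra)).
        simpl in *. lra. }
      assert (u^6 <= /64).
      { replace (u^6) with ((u^2)^3) by ring. pose proof (pow_small (u^2) (/4) 2 ltac:(lra)).
        simpl in *. nra. }
      assert (u^4/N <= /128).
      { apply Rle_trans with (u^4/8).
        - unfold Rdiv. apply Rmult_le_compat_l; [replace (u^4) with ((u^2)^2) by ring; apply pow2_ge_0|]. apply Rinv_le_contravar; lra.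
        - replace (u^4) with ((u^2)^2) by ring. simpl; nra. }
      assert (/N^3 <= /512) by (apply Rinv_le_contravar; [lra|]; simpl; nra).
      assert (N * u^8 <= N * (u^2/64)) by (apply Rmult_le_compat_l; lra).
      lra. }
    assert (BS : Bc N u * (N * u^2 + 1) <= 2 * Err N u).
    { unfold Bc, Err.
      replace ((N * u ^ 8 + u ^ 6 + u ^ 4 / N + / N ^ 3) * (N * u ^ 2 + 1))
        with (N^2 * u^10 + 2 * (N * u^8) + 2 * u^6 + u^4/N + u^2/N^2 + /N^3) by (field; lra).
      lra. }
    split; [lra|].
    assert (Hp : Rabs (g - Q0 N u + 2 * Q0 N u) <= 133 * (N * u^2 + 1)).
    { eapply Rle_trans; [apply Rabs_triang|]. fold e. rewrite Rabs_mult, (Rabs_pos_eq 2) by lra.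
      lra. }
    assert (HB0 : 0 <= Bc N u) by (unfold Bc; lra).
    apply Rle_trans with (129 * Bc N u * (133 * (N * u^2 + 1))).
    + apply Rmult_le_compat; [apply He|apply Rabs_pos|exact CB|exact Hp].
    + lra.
  -
    assert (Hu10 : 1 <= 1024 * u^10).
    { replace (u^10) with ((u^2)^5) by ring. assert (/4 < u^2) by lra.
      assert ((/4)^5 <= (u^2)^5) by (apply pow_incr; lra). simpl in *. lra. }
    pose proof (info_bounds n k Hk) as IB. pose proof (A_bounds n ltac:(lia)) as AB.
    fold N in IB, AB.
    pose proof (ln_le_sub1 2 ltac:(lra)) as L2. pose proof ln_lt_2.
    assert (Hg : Rabs g <= 2 * N) by (unfold g; unfold Rabs; destruct Rcase_abs; nra).
    pose proof (Q0_gen N u HN (u_le1 n k ltac:(lia) Hk)) as QG.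
    assert (H1 : Rabs (g - Q0 N u) <= 3 * N).
    { unfold Rminus. eapply Rle_trans; [apply Rabs_triang|]. rewrite Rabs_Ropp. lra. }
    assert (H2 : Rabs (g - Q0 N u + 2 * Q0 N u) <= 3 * N).
    { replace (g - Q0 N u + 2 * Q0 N u) with (g + Q0 N u) by ring.
      eapply Rle_trans; [apply Rabs_triang|]. lra. }
    assert (HN2 : 3 * N <= 3 * N^2 * 1) by nra.
    assert (HE : N^2 <= N^2 * (1024 * u^10)) by (pose proof (pow2_ge_0 N); nra).
    unfold Err. split.
    + nra.
    + apply Rle_trans with (3 * N * (3 * N)).
      * apply Rmult_le_compat; try apply Rabs_pos; lra.
      * nra.
Qed.


Lemma HN8 n (Hn : (8 <= n)%nat) : 8 <= INR n.
Proof. replace 8 with (INR 8) by (simpl; ring); apply le_INR; lia. Qed.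


Lemma w_pos n (Hn : (8 <= n)%nat) : 0 < / INR n <= /8.
Proof. pose proof (HN8 n Hn). split; [apply Rinv_0_lt_compat; lra|apply Rinv_le_contravar; lra]. Qed.

Definition lQ0 (N : R) := [/(4*N); 0; /(2*N) - /(2*N^2) + /(3*N^3); 0; /(12*N^3) - /(4*N^4); 0; /(30*N^5)].

Lemma Q0_pe N s : 8 <= N -> Q0 N (s / N) = pe (lQ0 N) 0 s.
Proof. intros. unfold Q0, lQ0. cbn [pe]. field. lra. Qed.

Lemma EQ0 n (Hn : (8 <= n)%nat) : let N := INR n in let w := / N in
  Ex n (fun k => Q0 N (sv n k / N)) = /2 - w^2/12 - w^3/2 + 8 * w^4 / 15.
Proof.
  intros N w. pose proof (HN8 n Hn).
  rewrite (Ex_ext n _ (fun k => pe (lQ0 N) 0 (sv n k))) by (intros; apply Q0_pe; auto).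
  rewrite Ex_pe. unfold lQ0. cbn [pm]. rewrite Mom0, Mom2, Mom4, Mom6. fold N.
  unfold w, N in *. field. lra.
Qed.

Definition q0 (N : R) := /(4*N).
Definition q2 (N : R) := /(2*N) - /(2*N^2) + /(3*N^3).
Definition q4 (N : R) := /(12*N^3) - /(4*N^4).
Definition q6 (N : R) := /(30*N^5).
Definition lQ2 (N : R) := [q0 N ^ 2; 0; 2 * q0 N * q2 N; 0; q2 N ^ 2 + 2 * q0 N * q4 N; 0;
   2 * q0 N * q6 N + 2 * q2 N * q4 N; 0; q4 N ^ 2 + 2 * q2 N * q6 N; 0; 2 * q4 N * q6 N; 0; q6 N ^ 2].

Lemma Q0sq_pe N s : 8 <= N -> Q0 N (s / N) ^ 2 = pe (lQ2 N) 0 s.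
Proof.
  intros. rewrite Q0_pe by auto. unfold lQ0, lQ2. fold (q0 N) (q2 N) (q4 N) (q6 N). cbn [pe].
  generalize (q0 N) (q2 N) (q4 N) (q6 N). intros. ring.
Qed.

Lemma EQ0sq n (Hn : (8 <= n)%nat) : let N := INR n in let w := / N in Ex n (fun k => Q0 N (sv n k / N) ^ 2) =
  (/2 - w^2/12 - w^3/2 + 8 * w^4 / 15) ^ 2 + (/2 - w/2 - w^2/2)
  + (- 16/3 * w^3 + 364/45 * w^4 - 13/45 * w^5 + 14981/90 * w^6 - 29491/45 * w^7
     + 198008/225 * w^8 - 88448/225 * w^9).
Proof.
  intros N w. pose proof (HN8 n Hn).
  rewrite (Ex_ext n _ (fun k => pe (lQ2 N) 0 (sv n k))) by (intros; apply Q0sq_pe; auto).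
  rewrite Ex_pe. unfold lQ2. cbn [pm]. rewrite Mom0, Mom2, Mom4, Mom6, Mom8, Mom10, Mom12. fold N.
  unfold q0, q2, q4, q6, w, N in *. field. lra.
Qed.

Definition lErr (N : R) := [/N^3; 0; /N^4; 0; /N^5; 0; /N^6; 0; /N^7; 0; /N^8].

Lemma Err_pe N s : 8 <= N -> Err N (s / N) = pe (lErr N) 0 s.
Proof. intros. unfold Err, lErr. cbn [pe]. field. lra. Qed.

Lemma EErr n (Hn : (8 <= n)%nat) : let N := INR n in let w := / N in
  Ex n (fun k => Err N (sv n k / N)) <= 26000 * w^3.
Proof.
  intros N w. pose proof (HN8 n Hn). pose proof (w_pos n Hn) as Hw. fold N w in Hw.
  rewrite (Ex_ext n _ (fun k => pe (lErr N) 0 (sv n k))) by (intros; apply Err_pe; auto).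
  rewrite Ex_pe. unfold lErr. cbn [pm]. rewrite Mom0, Mom2, Mom4, Mom6, Mom8, Mom10. fold N.
  match goal with |- ?L <= _ => replace L
   with (w^3 + w^3 + (3 * w^3 - 2 * w^4) + (15 * w^3 - 30 * w^4 + 16 * w^5)
     + (105 * w^3 - 420 * w^4 + 588 * w^5 - 272 * w^6)
     + (945 * w^3 - 6300 * w^4 + 16380 * w^5 - 18960 * w^6 + 7936 * w^7))
   by (unfold w, N in *; field; lra) end.
  assert (0 < w^3) by (apply pow_lt; lra).
  assert (0 <= w^4 <= w^3) by (split; [apply pow_le; lra| simpl; nra]).
  assert (0 <= w^5 <= w^3) by (split; [apply pow_le; lra| simpl; nra]).
  assert (0 <= w^6 <= w^3) by (split; [apply pow_le; lra| simpl; nra]).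
  assert (0 <= w^7 <= w^3) by (split; [apply pow_le; lra| simpl; nra]).
  lra.
Qed.



Definition cD := 40000 * 26000.

Lemma delta_bound n : (8 <= n)%nat ->
  Rabs (Ex n (fun k => binom_half_info n k - Aof n) - Ex n (fun k => Q0 (INR n) (sv n k / INR n)))
    <= cD * (/ INR n)^3
  /\ Rabs (Ex n (fun k => (binom_half_info n k - Aof n)^2) - Ex n (fun k => Q0 (INR n) (sv n k / INR n) ^ 2))
    <= cD * (/ INR n)^3.
Proof.
  intros Hn. pose proof (EErr n Hn) as EE.
  rewrite <- !Ex_minus.
  split; (eapply Rle_trans; [apply Ex_abs|]);
  (eapply Rle_trans; [apply Ex_le; intros k Hk; apply (pointwise n k Hn Hk)|]);
  rewrite Ex_scal; unfold cD; lra.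
Qed.

Lemma ln_target n : (1 <= n)%nat -> /2 * ln (PI * exp 1 * INR n / 2) = Aof n + /2.
Proof.
  intros Hn. unfold Aof. pose proof PI_RGT_0.
  assert (1 <= INR n) by (replace 1 with (INR 1) by reflexivity; apply le_INR; lia).
  replace (PI * exp 1 * INR n / 2) with (exp 1 * (PI * INR n / 2)) by field.
  rewrite ln_mult, ln_exp. lra. apply exp_pos. apply Rdiv_lt_0_compat; [nra|lra].
Qed.

Lemma entropy_Ex n : binom_half_entropy n = Ex n (fun k => binom_half_info n k).
Proof. reflexivity. Qed.

Lemma varentropy_Ex n : binom_half_varentropy n =
  Ex n (fun k => (binom_half_info n k - binom_half_entropy n) ^ 2).
Proof. reflexivity. Qed.

Theorem lemma6 :
  (exists K : R, exists N : nat, forall n : nat, (N <= n)%nat -> (0 < n)%nat ->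
     Rabs (binom_half_entropy n
           - (/ 2 * ln (PI * exp 1 * INR n / 2) - / (12 * INR n ^ 2)))
     <= K / INR n ^ 3) /\
  (exists K : R, exists N : nat, forall n : nat, (N <= n)%nat -> (0 < n)%nat ->
     Rabs (binom_half_varentropy n
           - (/ 2 - / (2 * INR n) - / (2 * INR n ^ 2)))
     <= K / INR n ^ 3).
Proof.
  split.
  - exists (cD + 1), 8%nat. intros n Hn _.
    pose proof (delta_bound n Hn) as [D1 _].
    pose proof (EQ0 n Hn) as EQ.
    pose proof (w_pos n Hn) as Hw.
    pose proof (HN8 n Hn) as HN.
    rewrite ln_target by lia.
    rewrite Ex_minus, Ex_const, EQ in D1. rewrite <- entropy_Ex in D1.
    set (w := / INR n) in *.
    replace (/ (12 * INR n ^ 2)) with (w^2/12) by (unfold w; field; lra).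
    replace ((cD + 1) / INR n ^ 3) with ((cD + 1) * w^3) by (unfold w; field; lra).
    set (H := binom_half_entropy n) in *. set (A := Aof n) in *.
    set (d := H - A - (/ 2 - w ^ 2 / 12 - w ^ 3 / 2 + 8 * w ^ 4 / 15)) in *.
    replace (H - (A + / 2 - w ^ 2 / 12)) with (d + (- w^3/2 + 8 * w^4/15)) by (unfold d; field).
    eapply Rle_trans; [apply Rabs_triang|].
    assert (0 < w^3) by (apply pow_lt; lra).
    assert (0 <= w^4 <= w^3) by (split; [apply pow_le; lra| simpl; nra]).
    assert (Rabs (- w ^ 3 / 2 + 8 * w ^ 4 / 15) <= w^3) by (unfold Rabs; destruct Rcase_abs; lra).
    lra.
  - exists (2109 + cD + cD * (2 + cD)), 8%nat. intros n Hn _.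
    pose proof (delta_bound n Hn) as [D1 D2].
    pose proof (EQ0 n Hn) as EQ. pose proof (EQ0sq n Hn) as EQ2.
    pose proof (w_pos n Hn) as Hw.
    pose proof (HN8 n Hn) as HN.
    rewrite EQ in D1. rewrite EQ2 in D2.
    set (g := fun k => binom_half_info n k - Aof n) in *.
    set (G := Ex n g) in *.
    assert (HV : binom_half_varentropy n = Ex n (fun k => g k ^ 2) - G ^ 2).
    { rewrite varentropy_Ex.
      assert (HH : binom_half_entropy n = G + Aof n).
      { unfold G, g. rewrite Ex_minus, Ex_const, <- entropy_Ex. ring. }
      rewrite HH.
      rewrite (Ex_ext n _ (fun k => g k ^ 2 + ((-2 * G) * g k + G^2))) by (intros; unfold g; ring).
      rewrite Ex_plus, Ex_plus, Ex_scal, Ex_const. fold G. ring. }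
    rewrite HV.
    set (w := / INR n) in *.
    replace (/ (2 * INR n)) with (w/2) by (unfold w; field; lra).
    replace (/ (2 * INR n ^ 2)) with (w^2/2) by (unfold w; field; lra).
    replace ((2109 + cD + cD * (2 + cD)) / INR n ^ 3) with ((2109 + cD + cD * (2 + cD)) * w^3)
      by (unfold w; field; lra).
    set (E := / 2 - w ^ 2 / 12 - w ^ 3 / 2 + 8 * w ^ 4 / 15) in *.
    set (Rw := - 16/3 * w^3 + 364/45 * w^4 - 13/45 * w^5 + 14981/90 * w^6 - 29491/45 * w^7
     + 198008/225 * w^8 - 88448/225 * w^9) in *.
    set (d := G - E) in *. set (d2 := Ex n (fun k => g k ^ 2) - (E ^ 2 + (/ 2 - w / 2 - w ^ 2 / 2) + Rw)) in *.
    replace (Ex n (fun k : nat => g k ^ 2) - G ^ 2 - (/ 2 - w / 2 - w ^ 2 / 2))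
      with (Rw + d2 - d * (2 * E + d)) by (unfold d, d2; field).
    assert (Hw3 : 0 < w^3) by (apply pow_lt; lra).
    assert (Hw3' : w^3 <= 1) by (simpl; nra).
    assert (HR : Rabs Rw <= 2109 * w^3).
    { assert (0 <= w^4 <= w^3) by (split; [apply pow_le; lra| simpl; nra]).
      assert (0 <= w^5 <= w^3) by (split; [apply pow_le; lra| simpl; nra]).
      assert (0 <= w^6 <= w^3) by (split; [apply pow_le; lra| simpl; nra]).
      assert (0 <= w^7 <= w^3) by (split; [apply pow_le; lra| simpl; nra]).
      assert (0 <= w^8 <= w^3) by (split; [apply pow_le; lra| simpl; nra]).
      assert (0 <= w^9 <= w^3) by (split; [apply pow_le; lra| simpl; nra]).
      unfold Rw, Rabs; destruct Rcase_abs; lra. }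
    assert (HE : Rabs E <= 1).
    { assert (0 <= w^2 <= 1) by (split; [apply pow_le; lra| simpl; nra]).
      assert (0 <= w^4 <= w^3) by (split; [apply pow_le; lra| simpl; nra]).
      unfold E, Rabs; destruct Rcase_abs; lra. }
    assert (HcD : 0 < cD) by (unfold cD; lra).
    assert (Hd1 : Rabs d <= cD) by (apply Rle_trans with (cD * w^3); [exact D1|nra]).
    assert (Hdd : Rabs (d * (2 * E + d)) <= cD * w^3 * (2 + cD)).
    { rewrite Rabs_mult. apply Rmult_le_compat; try apply Rabs_pos; [exact D1|].
      eapply Rle_trans; [apply Rabs_triang|]. rewrite Rabs_mult, (Rabs_pos_eq 2) by lra. lra. }
    unfold Rminus. eapply Rle_trans; [apply Rabs_triang|]. rewrite Rabs_Ropp.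
    eapply Rle_trans; [apply Rplus_le_compat_r; apply Rabs_triang|].
    assert (cD * w ^ 3 * (2 + cD) = (cD * (2 + cD)) * w^3) by ring.
    assert (D2b : Rabs d2 <= cD * w^3) by (unfold d2, g; exact D2). lra.
Qed.
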